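(* Let $L:\mathbb{R}\to\mathbb{R}_{+}$ be a convex loss function with $L(0)=0$. Suppose there is some $\epsilon>0$ such that $L$ is linear (affine) on the interval $(0,2+\epsilon)$. Then $L$ is Fisher consistent for binary classification; that is, for every random pair $(X,Y)$ with $Y\in\{-1,1\}$ and every feature value $\mathbf{x}$, writing $p:=\Pr(Y=1\mid \mathbf{x})$ and $q:=\Pr(Y=-1\mid \mathbf{x})$, \[ \operatorname*{arg\,min}_{z\in\mathbb{R}} \mathbf{E}_{Y\mid \mathbf{x}}\, L(1-Yz)=\operatorname*{arg\,min}_{z\in\mathbb{R}} \big(p\,L(1-z)+q\,L(1+z)\big)= f^{*}_{Bayes}(\mathbf{x}), \] where $f^{*}_{Bayes}(\mathbf{x})=1$ if $p>q$ and $f^{*}_{Bayes}(\mathbf{x})=-1$ if $p<q$.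
   Context: Binary classification setting: features $\mathbf{X}\in\mathcal{X}\subseteq\mathbb{R}^d$ and labels $Y\in\{-1,1\}$. The Bayes classifier is $f^{*}_{Bayes}(\mathbf{x})=1$ if $\Pr(Y=1\mid\mathbf{x})>\Pr(Y=-1\mid\mathbf{x})$ and $f^{*}_{Bayes}(\mathbf{x})=-1$ if $\Pr(Y=1\mid\mathbf{x})<\Pr(Y=-1\mid\mathbf{x})$. A loss function $L$ is called Fisher consistent (classification calibrated) if $\operatorname{arg\,min}_{f:\mathcal{X}\to\mathbb{R}}\mathbf{E}_{X,Y}L(1-Yf(\mathbf{X}))$ is solved by the Bayes classifier; in the binary (SVM) setting this holds when, for all $\mathbf{x}\in\mathcal{X}$, $\operatorname{arg\,min}_{z\in\mathbb{R}}\mathbf{E}_{Y\mid\mathbf{x}}L(1-Yz)=f^{*}_{Bayes}(\mathbf{x})$, which is the condition stated in the claim. *)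

(* Defs.v *)
From mathcomp Require Import all_boot all_order all_algebra.
From mathcomp Require Import reals.
Set Implicit Arguments. Unset Strict Implicit. Unset Printing Implicit Defensive.
Import Order.TTheory GRing.Theory Num.Theory.
Local Open Scope ring_scope.

Definition convex_loss (R : realType) (L : R -> R) : Prop :=
  forall (x y t : R), 0 <= t <= 1 ->
    L (t * x + (1 - t) * y) <= t * L x + (1 - t) * L y.

Definition affine_on (R : realType) (L : R -> R) (a b : R) : Prop :=
  exists c d : R, forall t : R, a < t < b -> L t = c * t + d.

Definition cond_risk (R : realType) (L : R -> R) (p q z : R) : R :=
  p * L (1 - z) + q * L (1 + z).

(* Bayes classifier value: 1 if p > q, -1 if p < q (only used when p != q). *)
Definition f_bayes (R : realType) (p q : R) : R := if q < p then 1 else -1.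

Definition is_argmin (R : realType) (g : R -> R) (z0 : R) : Prop :=
  forall z : R, g z0 <= g z.

(* Main.v *)
Require Import Defs.
From mathcomp Require Import all_boot all_order all_algebra.
From mathcomp Require Import reals.
From mathcomp Require Import lra.
Import Order.TTheory GRing.Theory Num.Theory.
Local Open Scope ring_scope.

Lemma mono_aux (R : realType) (L : R -> R)
  (HLnn : forall t : R, 0 <= L t) (Hconv : convex_loss L) (HL0 : L 0 = 0) :
  forall a b : R, 0 <= a -> a <= b -> L a <= L b.
Proof.
move=> a b a0 ab.
have [b0|bn0] := eqVneq b 0.
  have a00 : a = 0 by rewrite b0 in ab; lra.
  by rewrite a00 b0.
have bp : 0 < b by rewrite lt_neqAle eq_sym bn0 (le_trans a0 ab).
have t01 : 0 <= a / b <= 1.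
  by rewrite divr_ge0 ?(ltW bp) //= ler_pdivrMr // mul1r.
have := Hconv b 0 (a / b) t01.
rewrite mulr0 addr0 HL0 mulr0 addr0 divfK //.
move=> H; apply: (le_trans H).
have Lb := HLnn b.
rewrite ler_pdivrMr // in t01; case/andP: t01 => t0 t1.
by rewrite -[X in _ <= X]mul1r ler_wpM2r // ler_pdivrMr // mul1r.
Qed.

Lemma main_aux (R : realType) (L : R -> R)
  (HLnn : forall t : R, 0 <= L t) (Hconv : convex_loss L) (HL0 : L 0 = 0)
  (Hlin : exists eps : R, 0 < eps /\ affine_on L 0 (2 + eps)) :
  forall p q : R, 0 <= q -> p + q = 1 -> q < p ->
    forall z, cond_risk L p q 1 <= cond_risk L p q z.
Proof.
move=> p q q0 pq qp z.
have mono := @mono_aux R L HLnn Hconv HL0.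
case: Hlin => eps [ep [c [d Hcd]]].
have L2 : L 2 = c * 2 + d by apply: Hcd; lra.
have L1 : L 1 = c * 1 + d by apply: Hcd; lra.
have c0 : 0 <= c.
  have := mono 1 2 ler01 ltac:(lra); rewrite L1 L2; lra.
have d0 : 0 <= d.
  rewrite leNgt; apply/negP => dn.
  have cp : 0 < c.
    have := HLnn 1; rewrite L1; lra.
  set t := Num.min 1 (- d / (2 * c)).
  have t1 : t <= 1 by rewrite /t ge_min lexx.
  have t2 : t <= - d / (2 * c) by rewrite /t ge_min lexx orbT.
  have tp : 0 < t by rewrite /t lt_min ltr01 /= divr_gt0 //; lra.
  have Lt : L t = c * t + d by apply: Hcd; lra.
  have ct : c * t <= - d / 2.
    rewrite ler_pdivlMr // in t2; lra.
  have := HLnn t; rewrite Lt; lra.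
have L2n := HLnn 2.
rewrite /cond_risk subrr HL0 mulr0 add0r.
have -> : (1 + 1 : R) = 2 by [].
have [z1|z1] := leP 1 z.
  have := mono 2 (1 + z) ltac:(lra) ltac:(lra).
  have := HLnn (1 - z).
  move=> h1 h2.
  have : 0 <= p * L (1 - z) by apply: mulr_ge0; lra.
  have : q * L 2 <= q * L (1 + z) by apply: ler_wpM2l.
  move=> *; lra.
have [z2|z2] := leP z (-1).
  have := mono 2 (1 - z) ltac:(lra) ltac:(lra).
  move=> h1.
  have : p * L 2 <= p * L (1 - z) by apply: ler_wpM2l; lra.
  have : 0 <= q * L (1 + z) by apply: mulr_ge0.
  have : q * L 2 <= p * L 2 by apply: ler_wpM2r; lra.
  move=> *; lra.
have [ze|zne] := eqVneq z (-1).
  move=> *; lra.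
have zl : -1 < z by rewrite lt_neqAle eq_sym zne; lra.
rewrite (Hcd (1 - z)); last lra.
rewrite (Hcd (1 + z)); last lra.
rewrite L2.
have : 0 <= c * ((p - q) * (1 - z)) by apply: mulr_ge0 => //; apply: mulr_ge0; lra.
have : 0 <= d * p by apply: mulr_ge0; lra.
have -> : q = 1 - p by lra.
move=> *; nra.
Qed.

Theorem theorem1 (R : realType) (L : R -> R)
  (HLnn : forall t : R, 0 <= L t)
  (Hconv : convex_loss L)
  (HL0 : L 0 = 0)
  (Hlin : exists eps : R, 0 < eps /\ affine_on L 0 (2 + eps)) :
  forall p q : R, 0 <= p -> 0 <= q -> p + q = 1 -> p != q ->
    is_argmin (cond_risk L p q) (f_bayes p q).
Proof.
move=> p q p0 q0 pq npq z; rewrite /f_bayes.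
case: ifP => qp.
  exact: (@main_aux R L HLnn Hconv HL0 Hlin p q q0 pq qp z).
have pq' : p < q by rewrite lt_neqAle npq /= leNgt qp.
have := @main_aux R L HLnn Hconv HL0 Hlin q p p0 ltac:(lra) pq' (- z).
rewrite /cond_risk !opprK => h.
by rewrite addrC [X in _ <= X]addrC.
Qed.
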